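(* Let $G$ be an abelian group, $S$ a multiset of elements of $G$, and $\Gamma=\Phi(G,S)$. For any two distinct members $s,t$ of $S$, all the connected components of the induced subgraph $\Gamma[V_s\cup V_t]$ are isomorphic to one another, and each is complete bipartite (every vertex of the component lying in $V_s$ is adjacent to every vertex of the component lying in $V_t$).
   Context: For a group $G$ and a multiset $S$ of elements of $G$, $\Phi(G,S)$ is the multigraph (parallel edges allowed) whose vertex set is the union over the members $s$ of $S$ (with multiplicity, a repeated element giving a separate copy of its cosets per occurrence) of the levels $V_s=\{\langle s\rangle x: x\in G\}$ (right cosets), with, for $\langle s\rangle x\in V_s$, $\langle t\rangle y\in V_t$, $s,t$ distinct members of $S$, one edge labeled $g$ between them for each $g\in\langle s\rangle x\cap\langle t\rangle y$, and no other edges. The induced subgraph $\Gamma[X]$ has vertex set $X$ and all edges of $\Gamma$ with both end-points in $X$. *)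

(* Defs.v *)
From mathcomp Require Import all_boot all_order all_algebra.
From Stdlib Require Import Relation_Operators.
Set Implicit Arguments. Unset Strict Implicit. Unset Printing Implicit Defensive.
Import GRing.Theory.
Local Open Scope ring_scope.

Record mgraph := MGraph {
  mvert : Type;
  medge : Type;
  endpt : medge -> mvert * mvert }.

Definition madj (H : mgraph) (u v : mvert H) : Prop :=
  exists e : medge H, endpt e = (u, v) \/ endpt e = (v, u).

Definition mconn (H : mgraph) : mvert H -> mvert H -> Prop :=
  clos_refl_trans (mvert H) (@madj H).

Definition induced (H : mgraph) (X : mvert H -> Prop) : mgraph :=
  @MGraph {v : mvert H | X v}
          {e : medge H | X (endpt e).1 /\ X (endpt e).2}
          (fun e => (exist X (endpt (proj1_sig e)).1 (proj1 (proj2_sig e)),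
                     exist X (endpt (proj1_sig e)).2 (proj2 (proj2_sig e)))).

Definition component (H : mgraph) (v : mvert H) : mgraph :=
  induced (mconn v).

Definition miso (H1 H2 : mgraph) : Prop :=
  exists (f : mvert H1 -> mvert H2) (g : medge H1 -> medge H2),
    bijective f /\ bijective g /\
    forall e, endpt (g e) = (f (endpt e).1, f (endpt e).2) \/
              endpt (g e) = (f (endpt e).2, f (endpt e).1).

(** The group is written additively (zmodType = abelian group).
    Right coset <s> x = { k s + x | k in Z } = { s *~ k + x }. *)
Definition coset (G : zmodType) (s x : G) : G -> Prop :=
  fun y => exists k : int, y = s *~ k + x.

(** Vertices of Phi(G,S): pairs (i, C) with i a member (index) of the
    multiset S and C a coset of <S_i>. *)
Definition Phi_vert (G : zmodType) (S : seq G) : Type :=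
  {p : 'I_(size S) * (G -> Prop) | exists x : G, p.2 = coset (nth 0 S p.1) x}.

Definition lvl (G : zmodType) (S : seq G) (v : Phi_vert S) : 'I_(size S) :=
  (proj1_sig v).1.

Definition cos (G : zmodType) (S : seq G) (v : Phi_vert S) : G -> Prop :=
  (proj1_sig v).2.

(** Edges: for distinct members (each unordered pair counted once via
    lvl u < lvl v), one edge labelled g for each g in the intersection. *)
Definition Phi_edge (G : zmodType) (S : seq G) : Type :=
  {q : Phi_vert S * Phi_vert S * G |
     (lvl q.1.1 < lvl q.1.2)%N /\ cos q.1.1 q.2 /\ cos q.1.2 q.2}.

Definition Phi (G : zmodType) (S : seq G) : mgraph :=
  @MGraph (Phi_vert S) (Phi_edge S) (fun e => (proj1_sig e).1).

(* Main.v *)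
Require Import Defs.
From mathcomp Require Import all_boot all_order all_algebra.
From Stdlib Require Import Relation_Operators ProofIrrelevance FunctionalExtensionality PropExtensionality.
Set Implicit Arguments. Unset Strict Implicit. Unset Printing Implicit Defensive.
Import GRing.Theory.
Local Open Scope ring_scope.

Lemma sig_eq (A : Type) (P : A -> Prop) (x y : sig P) :
  proj1_sig x = proj1_sig y -> x = y.
Proof. destruct x as [x px], y as [y py]; simpl; intros ->. f_equal. apply proof_irrelevance. Qed.

Record iso_data (A B : mgraph) := IsoData {
  fv : mvert A -> mvert B; gv : mvert B -> mvert A;
  fe : medge A -> medge B; ge : medge B -> medge A;
  fvK : cancel fv gv; gvK : cancel gv fv;
  feK : cancel fe ge; geK : cancel ge fe;
  fendpt : forall e, endpt (fe e) = (fv (endpt e).1, fv (endpt e).2) }.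

Lemma gendpt A B (d : iso_data A B) e :
  endpt (ge d e) = (gv d (endpt e).1, gv d (endpt e).2).
Proof.
have := fendpt d (ge d e). rewrite geK => ->. rewrite /= !fvK.
by case: (endpt (ge d e)).
Qed.

Definition iso_sym A B (d : iso_data A B) : iso_data B A :=
  IsoData (gvK d) (fvK d) (geK d) (feK d) (gendpt d).

Lemma iso_miso A B (d : iso_data A B) : miso A B.
Proof.
exists (fv d), (fe d); split; [|split].
- exact: Bijective (fvK d) (gvK d).
- exact: Bijective (feK d) (geK d).
- by move=> e; left; rewrite fendpt.
Qed.

Section Ind.
Variables (A B : mgraph) (d : iso_data A B) (X : mvert A -> Prop) (Y : mvert B -> Prop).
Hypothesis hXY : forall v, X v -> Y (fv d v).
Hypothesis hYX : forall v, Y v -> X (gv d v).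

Definition ifv (v : mvert (induced X)) : mvert (induced Y) :=
  exist Y (fv d (proj1_sig v)) (hXY (proj2_sig v)).
Definition igv (v : mvert (induced Y)) : mvert (induced X) :=
  exist X (gv d (proj1_sig v)) (hYX (proj2_sig v)).

Lemma ife_pf (e : medge (induced X)) :
  Y (endpt (fe d (proj1_sig e))).1 /\ Y (endpt (fe d (proj1_sig e))).2.
Proof. case: e => e [h1 h2] /=; rewrite fendpt; split; exact: hXY. Qed.
Lemma ige_pf (e : medge (induced Y)) :
  X (endpt (ge d (proj1_sig e))).1 /\ X (endpt (ge d (proj1_sig e))).2.
Proof. case: e => e [h1 h2] /=; rewrite gendpt; split; exact: hYX. Qed.

Definition ife (e : medge (induced X)) : medge (induced Y) :=
  exist _ (fe d (proj1_sig e)) (ife_pf e).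
Definition ige (e : medge (induced Y)) : medge (induced X) :=
  exist _ (ge d (proj1_sig e)) (ige_pf e).

Definition ind_iso : iso_data (induced X) (induced Y).
Proof.
refine (@IsoData _ _ ifv igv ife ige _ _ _ _ _).
- by move=> v; apply: sig_eq; rewrite /= fvK.
- by move=> v; apply: sig_eq; rewrite /= gvK.
- by move=> v; apply: sig_eq; rewrite /= feK.
- by move=> v; apply: sig_eq; rewrite /= geK.
- move=> e /=; congr pair; apply: sig_eq; by rewrite /= fendpt.
Defined.
End Ind.

Lemma iso_madj A B (d : iso_data A B) u v : madj u v -> madj (fv d u) (fv d v).
Proof. by case=> e [h|h]; exists (fe d e); rewrite fendpt h; [left|right]. Qed.

Lemma iso_conn A B (d : iso_data A B) u v : mconn u v -> mconn (fv d u) (fv d v).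
Proof.
elim=> [x y h|x|x y z _ h1 _ h2].
- by apply: rt_step; apply: iso_madj.
- exact: rt_refl.
- exact: rt_trans h1 h2.
Qed.

Lemma mconn_sym A (u v : mvert A) : mconn u v -> mconn v u.
Proof.
elim=> [x y [e [h|h]]|x|x y z _ h1 _ h2].
- by apply: rt_step; exists e; [right].
- by apply: rt_step; exists e; [left].
- exact: rt_refl.
- exact: rt_trans h2 h1.
Qed.

Section Tr.
Variables (G : zmodType) (S : seq G).

Lemma tv_pf (d : G) (v : Phi_vert S) :
  exists x : G, (fun z => cos v (z - d)) = coset (nth 0 S (lvl v)) x.
Proof.
case: v => [[l C] [x /= Hx]]; exists (x + d); rewrite /cos /lvl /= Hx.
apply: functional_extensionality => z; apply: propositional_extensionality.
split=> [[k Hk]|[k Hk]]; exists k.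
- by rewrite addrA -Hk subrK.
- by rewrite Hk addrA addrK.
Qed.

Definition tv (d : G) (v : Phi_vert S) : Phi_vert S :=
  exist _ (lvl v, fun z => cos v (z - d)) (tv_pf d v).

Lemma te_pf (d : G) (e : Phi_edge S) :
  (lvl (tv d (proj1_sig e).1.1) < lvl (tv d (proj1_sig e).1.2))%N /\
  cos (tv d (proj1_sig e).1.1) ((proj1_sig e).2 + d) /\
  cos (tv d (proj1_sig e).1.2) ((proj1_sig e).2 + d).
Proof.
case: e => [[[u v] g] [h1 [h2 h3]]] /=; split; first exact: h1.
by rewrite /cos /= addrK; split.
Qed.

Definition te (d : G) (e : Phi_edge S) : Phi_edge S :=
  exist _ (tv d (proj1_sig e).1.1, tv d (proj1_sig e).1.2, (proj1_sig e).2 + d) (te_pf d e).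

Lemma tvK d : cancel (tv d) (tv (- d)).
Proof.
move=> v; apply: sig_eq; case: v => [[l C] pf] /=; congr pair.
by apply: functional_extensionality => z; rewrite /cos /= opprK addrK.
Qed.
Lemma tvKV d : cancel (tv (- d)) (tv d).
Proof.
move=> v; apply: sig_eq; case: v => [[l C] pf] /=; congr pair.
by apply: functional_extensionality => z; rewrite /cos /= opprK subrK.
Qed.
Lemma teK d : cancel (te d) (te (- d)).
Proof. move=> e; apply: sig_eq; case: e => [[[u v] g] pf] /=. by rewrite !tvK addrK. Qed.
Lemma teKV d : cancel (te (- d)) (te d).
Proof. move=> e; apply: sig_eq; case: e => [[[u v] g] pf] /=. by rewrite !tvKV subrK. Qed.

Definition phi_iso (d : G) : iso_data (Phi S) (Phi S) :=
  @IsoData (Phi S) (Phi S) (tv d) (tv (- d)) (te d) (te (- d))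
    (tvK d) (tvKV d) (teK d) (teKV d) (fun e => erefl).
End Tr.

Lemma adj_share (G : zmodType) (S : seq G) (X : mvert (Phi S) -> Prop)
  (p q : mvert (induced X)) h :
  lvl (proj1_sig p) <> lvl (proj1_sig q) ->
  cos (proj1_sig p) h -> cos (proj1_sig q) h -> madj p q.
Proof.
case: p => p hp; case: q => q hq /= hne hp' hq'.
case: (ltngtP (lvl p) (lvl q)) => c.
- exists (@exist (Phi_edge S) (fun e => X (@endpt (Phi S) e).1 /\ X (@endpt (Phi S) e).2)
    (@exist _ _ (p, q, h) (conj c (conj hp' hq'))) (conj hp hq)).
  by left; congr pair; apply: sig_eq.
- exists (@exist (Phi_edge S) (fun e => X (@endpt (Phi S) e).1 /\ X (@endpt (Phi S) e).2)
    (@exist _ _ (q, p, h) (conj c (conj hq' hp'))) (conj hq hp)).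
  by right; congr pair; apply: sig_eq.
- by case: hne; apply: val_inj.
Qed.

Lemma adj_share_inv (G : zmodType) (S : seq G) (X : mvert (Phi S) -> Prop)
  (p q : mvert (induced X)) :
  madj p q -> exists h, cos (proj1_sig p) h /\ cos (proj1_sig q) h.
Proof.
intros [[[[[p0 q0] h] [h0 [h1 h2]]] hX] [E|E]];
  have Ep := f_equal fst E; have Eq := f_equal snd E; simpl in Ep, Eq;
  by exists h; rewrite -Ep -Eq /=; split.
Qed.

Lemma cos_self (G : zmodType) (S : seq G) (v : Phi_vert S) :
  exists x, cos v x /\ cos v = coset (nth 0 S (lvl v)) x.
Proof.
case: v => [[l C] [x /= Hx]]; exists x; rewrite /cos /lvl /= Hx; split=> //.
by exists 0; rewrite mulr0z add0r.
Qed.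

Lemma mzD (M : zmodType) (x : M) (m n : int) : x *~ (m + n) = x *~ m + x *~ n.
Proof. exact: mulrzDr. Qed.

Section Main.
Variables (G : zmodType) (S : seq G) (i j : 'I_(size S)).
Hypothesis hij : i != j.
Definition LP := fun v : mvert (Phi S) => lvl v = i \/ lvl v = j.
Definition HH := induced LP.

Lemma conn_share (p q : mvert HH) h :
  cos (proj1_sig p) h -> cos (proj1_sig q) h -> mconn p q.
Proof.
move=> hp hq.
case: (eqVneq (lvl (proj1_sig p)) (lvl (proj1_sig q))) => e; last first.
  by apply: rt_step; apply: (adj_share (h := h)) => //; apply/eqP.
pose k := if lvl (proj1_sig p) == i then j else i.
have pf : exists x, (k, coset (nth 0 S k) h).2 = coset (nth 0 S (k, coset (nth 0 S k) h).1) x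
  by exists h.
pose w0 : Phi_vert S := exist _ (k, coset (nth 0 S k) h) pf.
have hw : LP w0 by rewrite /LP /lvl /= /k; case: ifP; [right|left].
pose w : mvert HH := exist _ w0 hw.
have cw : cos (proj1_sig w) h by exists 0; rewrite mulr0z add0r.
have nk : lvl (proj1_sig p) <> lvl (proj1_sig w).
  change (lvl (proj1_sig p) <> k); rewrite /k; case: ifP => [/eqP -> | /negbT hn].
  - by move/eqP; rewrite (negbTE hij).
  - by move=> E; rewrite E eqxx in hn.
apply: (@rt_trans _ _ _ w).
- by apply: rt_step; apply: (adj_share (h := h)).
- apply: rt_step; apply: (adj_share (h := h)) => //.
  by move=> E; apply: nk; rewrite e E.
Qed.
End Main.

Theorem proposition5 (G : zmodType) (S : seq G) (i j : 'I_(size S)) :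
  i != j ->
  let H := induced (fun v : mvert (Phi S) => lvl v = i \/ lvl v = j) in
  (forall u v : mvert H, miso (component u) (component v)) /\
  (forall u v : mvert H, mconn u v ->
     lvl (proj1_sig u) = i -> lvl (proj1_sig v) = j -> madj u v).
Proof.
move=> hij H; split.
- move=> u v.
  have [x [cx ex]] := cos_self (proj1_sig u).
  have [y [cy ey]] := cos_self (proj1_sig v).
  pose d := y - x.
  pose Hd : iso_data H H := @ind_iso _ _ (phi_iso S d) (LP i j) (LP i j) (fun v h => h) (fun v h => h).
  have cv : mconn v (fv Hd u).
    apply: (conn_share hij (h := y)) => //.
    change (cos (proj1_sig u) (y - d)).
    by rewrite /d opprB addrC subrK.
  refine (iso_miso (@ind_iso _ _ Hd (mconn u) (mconn v) _ _)).
  + by move=> w cw; exact: rt_trans cv (iso_conn Hd cw).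
  + move=> w cw.
    have c1 : mconn (gv Hd v) (gv Hd (fv Hd u)) := iso_conn (iso_sym Hd) cv.
    rewrite fvK in c1.
    exact: rt_trans (mconn_sym c1) (iso_conn (iso_sym Hd) cw).
- move=> u v cuv lu lv.
  have [x [cx ex]] := cos_self (proj1_sig u).
  pose Q (w : mvert H) := exists g, cos (proj1_sig w) g /\
     exists m n : int, g - x = S`_i *~ m + S`_j *~ n.
  have step : forall p q : mvert H, madj p q -> Q p -> Q q.
    move=> p q /adj_share_inv [h [hp hq]] [g [cg [m [n e]]]].
    exists h; split => //.
    have [z [_ ez]] := cos_self (proj1_sig p).
    move: cg hp; rewrite ez => [[k1 e1] [k2 e2]].
    have E : h - x = (h - g) + (g - x) by rewrite addrA subrK.
    have E2 : h - g = S`_(lvl (proj1_sig p)) *~ (k2 - k1).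
      by rewrite e1 e2 mulrzBr opprD addrACA subrr addr0.
    case: (proj2_sig p) => lp; rewrite lp in E2.
    + by exists (k2 - k1 + m), n; rewrite E E2 e (mzD _ (k2 - k1)) addrA.
    + by exists m, (k2 - k1 + n); rewrite E E2 e (mzD _ (k2 - k1)) addrCA.
  have Qu : Q u.
    by exists x; split => //; exists 0, 0; rewrite subrr !mulr0z addr0.
  have gen : forall p q, mconn p q -> Q p -> Q q.
    move=> p q; elim=> [p0 q0 hpq|p0|p0 q0 r0 _ h1 _ h2] //.
    + exact: step.
    + by move/h1/h2.
  have [g [cg [m [n e]]]] := gen _ _ cuv Qu.
  have [y [_ ey]] := cos_self (proj1_sig v).
  move: cg; rewrite ey lv => [[k ek]].
  apply: (adj_share (h := S`_i *~ m + x)).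
  + by rewrite lu lv => E; rewrite E eqxx in hij.
  + by rewrite ex lu; exists m.
  + rewrite ey lv; exists (k - n).
    have -> : S`_i *~ m = g - x - S`_j *~ n by rewrite e addrK.
    by rewrite addrAC subrK ek mulrzBr addrAC.
Qed.
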